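(* Let $\Lambda=\{z:\operatorname{Im}z>0\}$. For an integer $n\ge0$ let $\Omega_n=\{(p,q)\in\mathbb Z^2: 0\le p\le n,\ 0\le q\le n,\ (p,q)\ne(n,n)\}$, let $\mathcal A_n$ be the complex linear span of the functions $\frac{z^p\,\overline z^{\,q}}{(z-\overline z)^n}$, $(p,q)\in\Omega_n$, and $\mathcal A=\sum_{n\ge0}\mathcal A_n$. Let $\mathcal B$ be the space of all differential operators on $\Lambda$ that are finite sums of the form $$\sum_{\alpha,\beta,\gamma,\alpha',\beta',\gamma'\ge0}V_{\alpha,\beta,\gamma,\alpha',\beta',\gamma'}(z,\overline z)\Bigl(z^2\tfrac{\partial}{\partial z}\Bigr)^{\alpha}\Bigl(z\tfrac{\partial}{\partial z}\Bigr)^{\beta}\Bigl(\tfrac{\partial}{\partial z}\Bigr)^{\gamma}\Bigl(\overline z^{\,2}\tfrac{\partial}{\partial \overline z}\Bigr)^{\alpha'}\Bigl(\overline z\tfrac{\partial}{\partial \overline z}\Bigr)^{\beta'}\Bigl(\tfrac{\partial}{\partial \overline z}\Bigr)^{\gamma'},$$ with coefficients $V_{\alpha,\beta,\gamma,\alpha',\beta',\gamma'}\in\mathcal A$ (acting as multiplication operators). Then $\mathcal B$ is a subalgebra of the algebra of all differential operators on $\Lambda$, and $\mathcal B$ is generated (as an algebra) by the operators $$\frac{1}{z-\overline z},\quad z^2\frac{\partial}{\partial z},\quad z\frac{\partial}{\partial z},\quad \frac{\partial}{\partial z},\quad \overline z^{\,2}\frac{\partial}{\partial\overline z},\quad \overline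 z\frac{\partial}{\partial\overline z},\quad \frac{\partial}{\partial\overline z}.$$
   Context: $\frac{\partial}{\partial z}$, $\frac{\partial}{\partial\overline z}$ are the Wirtinger derivatives on $\Lambda$; $\frac1{z-\overline z}$ denotes the operator of multiplication by this function. *)

(* Defs.v *)
(* Algebraic model of differential operators on the upper
   half plane with rational coefficients in z and zbar. *)
From HB Require Import structures.
From mathcomp Require Import all_boot all_order all_algebra.
From mathcomp Require Import complex.
Set Implicit Arguments. Unset Strict Implicit. Unset Printing Implicit Defensive.
Import Order.TTheory GRing.Theory Num.Theory.
Local Open Scope ring_scope.

Section WeylModel.
Variable R : rcfType.
Local Notation C := (R[i])%C.

(* Polynomials in two independent variables: the outer variable is z,
   the inner (coefficient) variable is w = zbar. *)
Definition Pol := {poly {poly C}}.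
Definition Kf := {fraction Pol}.

Definition polZ : Pol := 'X.
Definition polW : Pol := ('X : {poly C})%:P.
Definition Zf : Kf := tofrac polZ.
Definition Wf : Kf := tofrac polW.
Definition cst (c : C) : Kf := tofrac ((c%:P)%:P).

Definition pdz (p : Pol) : Pol := deriv p.
Definition pdw (p : Pol) : Pol := map_poly (@deriv _) p.

(* quotient rule on a representative (independent of the representative) *)
Definition fderiv (d : Pol -> Pol) (f : Kf) : Kf :=
  let x := repr f in
  tofrac (d (\n_x) * \d_x - \n_x * d (\d_x)) / tofrac (\d_x ^+ 2).

Definition dz : Kf -> Kf := fderiv pdz.
Definition dzb : Kf -> Kf := fderiv pdw.

Definition Op := Kf -> Kf.
Definition mulop (a : Kf) : Op := fun f => a * f.
Definition op_add (D1 D2 : Op) : Op := fun f => D1 f + D2 f.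
Definition op_scale (c : C) (D : Op) : Op := fun f => cst c * D f.
Definition op_comp (D1 D2 : Op) : Op := fun f => D1 (D2 f).
Definition op_id : Op := fun f => f.

Inductive alg_gen (G : Op -> Prop) : Op -> Prop :=
| ag_base D : G D -> alg_gen G D
| ag_id : alg_gen G op_id
| ag_add D1 D2 : alg_gen G D1 -> alg_gen G D2 -> alg_gen G (op_add D1 D2)
| ag_scale c D : alg_gen G D -> alg_gen G (op_scale c D)
| ag_comp D1 D2 : alg_gen G D1 -> alg_gen G D2 -> alg_gen G (op_comp D1 D2).

Definition is_diffop (D : Op) : Prop :=
  alg_gen (fun E => (exists a, E = mulop a) \/ E = dz \/ E = dzb) D.

Definition in_An (n : nat) (V : Kf) : Prop :=
  exists c : nat -> nat -> C,
    V = \sum_(p < n.+1) \sum_(q < n.+1 | ((p : nat), (q : nat)) != (n, n))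
          cst (c p q) * (Zf ^+ p * Wf ^+ q / (Zf - Wf) ^+ n).

Definition in_A (V : Kf) : Prop :=
  exists (N : nat) (Vs : nat -> Kf),
    (forall n, in_An n (Vs n)) /\ V = \sum_(n < N) Vs n.

Definition L1 : Op := fun f => Zf ^+ 2 * dz f.
Definition L2 : Op := fun f => Zf * dz f.
Definition L3 : Op := dz.
Definition L1b : Op := fun f => Wf ^+ 2 * dzb f.
Definition L2b : Op := fun f => Wf * dzb f.
Definition L3b : Op := dzb.

Definition monomial_op (a b g a' b' g' : nat) : Op :=
  fun f => iter a L1 (iter b L2 (iter g L3
             (iter a' L1b (iter b' L2b (iter g' L3b f))))).

Definition in_B (D : Op) : Prop :=
  exists s : seq (nat * nat * nat * nat * nat * nat * Kf),
    (forall t, t \in s -> in_A t.2) /\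
    D = fun f => \sum_(t <- s)
          t.2 * monomial_op t.1.1.1.1.1.1 t.1.1.1.1.1.2 t.1.1.1.1.2
                            t.1.1.1.2 t.1.1.2 t.1.2 f.

Definition B_gens (D : Op) : Prop :=
  D = mulop (1 / (Zf - Wf)) \/ D = L1 \/ D = L2 \/ D = L3 \/
  D = L1b \/ D = L2b \/ D = L3b.

End WeylModel.

(* Main.v *)
Require Import Defs.
From HB Require Import structures.
From mathcomp Require Import all_boot all_order all_algebra.
From mathcomp Require Import complex.
From mathcomp Require Import ring lra zify.
From Stdlib Require Import FunctionalExtensionality.
Set Implicit Arguments. Unset Strict Implicit. Unset Printing Implicit Defensive.
Import Order.TTheory GRing.Theory Num.Theory.
Local Open Scope ring_scope.
Lemma aux1 (F : fieldType) (N M N' M' : F) : M != 0 -> M' != 0 -> N / M = N' / M' -> N * M' = N' * M.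
Proof.
move=> h1 h2 e.
have -> : N = N' / M' * M by rewrite -e mulfVK.
by rewrite mulrAC mulfVK.
Qed.
Lemma aux2 (F : fieldType) (N M N' M' DN DM DN' DM' : F) : M != 0 -> M' != 0 ->
  N * M' = N' * M -> DN * M' + N * DM' = DN' * M + N' * DM ->
  (DN' * M' - N' * DM') / (M' * M') = (DN * M - N * DM) / (M * M).
Proof.
move=> HM HM' E E2.
have EN' : N' = N * M' / M by rewrite E mulfK.
have EDN' : DN' = (DN * M' + N * DM' - N' * DM) / M.
  by rewrite E2 addrK mulfK.
rewrite EDN' EN'. field. by rewrite HM HM'.
Qed.
Section S.
Variable R : rcfType.
Local Notation Kf := (Kf R).
Local Notation Pol := (Pol R).
Lemma frac_repr (f : Kf) : f = tofrac (\n_(repr f)) / tofrac (\d_(repr f)).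
Proof.
have Hd : \d_(repr f) != 0 by [].
apply/(@mulIf _ (tofrac (\d_(repr f)))); first by rewrite tofrac_eq0.
rewrite mulfVK ?tofrac_eq0 //.
rewrite -{1}[f]reprK.
set x := repr f.
unlock tofrac.
transitivity (@FracField.mul Pol (\pi_({fraction Pol}) x)%qT (\pi_({fraction Pol}) (Ratio \d_x 1))%qT); first by []. rewrite -FracField.pi_mul.
apply/eqmodP. rewrite /= FracField.equivfE /FracField.mulf /= !numden_Ratio ?oner_neq0 ?mulf_neq0 //.
1: by rewrite !mulr1 mulrC. all: exact: oner_neq0.
Qed.
Lemma tM (a b : Pol) : tofrac (a * b) = tofrac a * tofrac b :> Kf. Proof. exact: tofracM. Qed.
Lemma tB (a b : Pol) : tofrac (a - b) = tofrac a - tofrac b :> Kf. Proof. exact: tofracB. Qed.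
Lemma tD (a b : Pol) : tofrac (a + b) = tofrac a + tofrac b :> Kf. Proof. exact: tofracD. Qed.
Lemma tX (a : Pol) k : tofrac (a ^+ k) = tofrac a ^+ k :> Kf. Proof. exact: tofracXn. Qed.
Lemma fderiv_frac (d : Pol -> Pol)
  (dM : forall p q, d (p * q) = d p * q + p * d q) (n m : Pol) :
  m != 0 -> fderiv d (tofrac n / tofrac m) = tofrac (d n * m - n * d m) / tofrac (m ^+ 2).
Proof.
move=> m0.
have := frac_repr (tofrac n / tofrac m).
rewrite /fderiv. move: (repr _) => x.
move: (denom_ratioP x). move: (\n_x) (\d_x) => n' m' m'0 Hf.
have Mm : tofrac m != 0 :> Kf by rewrite tofrac_eq0.
have Mm' : tofrac m' != 0 :> Kf by rewrite tofrac_eq0.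
have E : n * m' = n' * m.
  apply/eqP. rewrite -tofrac_eq. rewrite !tM. apply/eqP.
  apply: (@aux1 Kf). exact Mm. exact Mm'. exact Hf.
have E2 : d n * m' + n * d m' = d n' * m + n' * d m by rewrite -!dM E.
move/(congr1 (@tofrac _)): E; move/(congr1 (@tofrac _)): E2.
rewrite !tB !tM !tD !tM => E2 E.
exact: (@aux2 Kf _ _ _ _ _ _ _ _ Mm Mm' E E2). Qed.

End S.

Lemma aux_add (F : fieldType) (n1 d1 n2 d2 dn1 dd1 dn2 dd2 : F) : d1 != 0 -> d2 != 0 ->
  ((dn1 * d2 + n1 * dd2 + (dn2 * d1 + n2 * dd1)) * (d1 * d2) - (n1 * d2 + n2 * d1) * (dd1 * d2 + d1 * dd2))
   / ((d1 * d2) * (d1 * d2)) = (dn1 * d1 - n1 * dd1) / (d1 * d1) + (dn2 * d2 - n2 * dd2) / (d2 * d2).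
Proof. move=> h1 h2; field; by rewrite h1 h2. Qed.
Lemma aux_mul (F : fieldType) (n1 d1 n2 d2 dn1 dd1 dn2 dd2 : F) : d1 != 0 -> d2 != 0 ->
  ((dn1 * n2 + n1 * dn2) * (d1 * d2) - (n1 * n2) * (dd1 * d2 + d1 * dd2))
   / ((d1 * d2) * (d1 * d2)) = (dn1 * d1 - n1 * dd1) / (d1 * d1) * (n2 / d2) + (n1 / d1) * ((dn2 * d2 - n2 * dd2) / (d2 * d2)).
Proof. move=> h1 h2; field; by rewrite h1 h2. Qed.

Lemma aux_addfrac (F : fieldType) (n1 d1 n2 d2 : F) : d1 != 0 -> d2 != 0 ->
  n1 / d1 + n2 / d2 = (n1 * d2 + n2 * d1) / (d1 * d2).
Proof. move=> h1 h2; field; by rewrite h1 h2. Qed.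
Lemma aux_mulfrac (F : fieldType) (n1 d1 n2 d2 : F) : 
  n1 / d1 * (n2 / d2) = (n1 * n2) / (d1 * d2).
Proof. by rewrite invfM mulrACA. Qed.
Section S.
Variable R : rcfType.
Local Notation Kf := (Kf R).
Local Notation Pol := (Pol R).

Section Der.
Variable d : Pol -> Pol.
Hypothesis dD : forall p q, d (p + q) = d p + d q.
Hypothesis dM : forall p q, d (p * q) = d p * q + p * d q.

Lemma dd1 : d 1 = 0.
Proof. have h := dM 1 1. rewrite !mul1r mulr1 in h. by apply: (@addrI _ (d 1)); rewrite addr0 -h. Qed.

Lemma fd_frac n m : m != 0 -> fderiv d (tofrac n / tofrac m) = tofrac (d n * m - n * d m) / tofrac (m * m).
Proof. move=> h; exact: fderiv_frac. Qed.

Lemma fd_tofrac p : fderiv d (tofrac p) = tofrac (d p).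
Proof.
have h1 : (1 : Pol) != 0 := oner_neq0 _.
have := fd_frac p h1. rewrite dd1 (mulr1 (d p)) (mulr0 p) (subr0 (d p)) (mulr1 (1 : Pol)) (tofrac1 Pol) (divr1 (tofrac p)) (divr1 (tofrac (d p))). exact.

Qed.

Lemma fd_add (a b : Kf) : fderiv d (a + b) = fderiv d a + fderiv d b.
Proof.
rewrite [a]frac_repr [b]frac_repr.
move: (repr a) (repr b) => x y.
move: (denom_ratioP x) (denom_ratioP y).
move: (\n_x) (\d_x) (\n_y) (\d_y) => n1 d1 n2 d2 h1 h2.
have h12 : d1 * d2 != 0 by rewrite mulf_neq0.
have H1 : tofrac d1 != 0 :> Kf by rewrite tofrac_eq0.
have H2 : tofrac d2 != 0 :> Kf by rewrite tofrac_eq0.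
have -> : tofrac n1 / tofrac d1 + tofrac n2 / tofrac d2 = tofrac (n1 * d2 + n2 * d1) / tofrac (d1 * d2) :> Kf.
  rewrite tD !tM. apply: (@aux_addfrac Kf). exact H1. exact H2.
rewrite (fd_frac _ h12) (fd_frac _ h1) (fd_frac _ h2).
rewrite !dD !dM !tB !tM !tD !tM.
apply: (@aux_add Kf). exact H1. exact H2.
Qed.

Lemma fd_mul (a b : Kf) : fderiv d (a * b) = fderiv d a * b + a * fderiv d b.
Proof.
rewrite [a]frac_repr [b]frac_repr.
move: (repr a) (repr b) => x y.
move: (denom_ratioP x) (denom_ratioP y).
move: (\n_x) (\d_x) (\n_y) (\d_y) => n1 d1 n2 d2 h1 h2.
have h12 : d1 * d2 != 0 by rewrite mulf_neq0.
have H1 : tofrac d1 != 0 :> Kf by rewrite tofrac_eq0.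
have H2 : tofrac d2 != 0 :> Kf by rewrite tofrac_eq0.
have -> : tofrac n1 / tofrac d1 * (tofrac n2 / tofrac d2) = tofrac (n1 * n2) / tofrac (d1 * d2) :> Kf.
  rewrite !tM. exact: (@aux_mulfrac Kf).
rewrite (fd_frac _ h12) (fd_frac _ h1) (fd_frac _ h2).
rewrite !dM !tB !tM !tD !tM.
apply: (@aux_mul Kf). exact H1. exact H2.
Qed.

Lemma fd_zero (e : Kf -> Kf) (eD : forall a b, e (a + b) = e a + e b)
  (eM : forall a b, e (a * b) = e a * b + a * e b) (eT : forall p, e (tofrac p) = 0) f : e f = 0.
Proof.
rewrite [f]frac_repr. move: (repr f) => x. move: (denom_ratioP x).
move: (\n_x) (\d_x) => n m hm.
have Hm : tofrac m != 0 :> Kf by rewrite tofrac_eq0.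
have := eM (tofrac n / tofrac m) (tofrac m).
rewrite (mulfVK Hm) (eT n) (eT m) mulr0 addr0 => /esym /eqP.
rewrite mulf_eq0 (negbTE Hm) orbF => /eqP. exact.
Qed.
End Der.
End S.

Section Derivation.
Variable F : fieldType.
Variable de : F -> F.
Hypothesis deD : forall a b, de (a + b) = de a + de b.
Hypothesis deM : forall a b, de (a * b) = de a * b + a * de b.

Lemma de0 : de 0 = 0.
Proof. have h := deD 0 0. rewrite addr0 in h. by apply: (@addrI _ (de 0)); rewrite addr0 -h. Qed.
Lemma deN a : de (- a) = - de a.
Proof. apply/eqP; rewrite -subr_eq0 opprK -deD addrC subrr de0 //. Qed.
Lemma deB a b : de (a - b) = de a - de b.
Proof. by rewrite deD deN. Qed.
Lemma de1 : de 1 = 0.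
Proof. have h := deM 1 1. rewrite !mul1r mulr1 in h. by apply: (@addrI _ (de 1)); rewrite addr0 -h. Qed.
Lemma deMn a k : de (a *+ k) = de a *+ k.
Proof. elim: k => [|k IH]; first by rewrite !mulr0n de0. by rewrite !mulrS deD IH. Qed.
Lemma deX a k : de (a ^+ k) = a ^+ k.-1 * de a *+ k.
Proof.
elim: k => [|k IH]; first by rewrite expr0 de1 mulr0n.
rewrite exprS deM IH. case: k IH => [|k] IH /=.
  by rewrite expr0 mulr0n mulr0 addr0 mulr1 mulr1n mul1r.
rewrite -mulrnAr mulrA -exprS [de a * _]mulrC. by rewrite -mulrDr -mulrS mulrnAr.
Qed.
Lemma deV a : a != 0 -> de (a^-1) = - (a^-1) ^+ 2 * de a.
Proof.
move=> a0. have h := deM a a^-1. rewrite mulfV // de1 in h.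
have h2 : a * de a^-1 = - (de a * a^-1) by apply/eqP; rewrite -addr_eq0 addrC -h.
apply: (mulfI a0). rewrite h2. field. done.
Qed.
Lemma deC c f : de c = 0 -> de (c * f) = c * de f.
Proof. move=> h; by rewrite deM h mul0r add0r. Qed.

Variable Zv : F.
Hypothesis deZ : de Zv = 1.
Definition l1 (f : F) := Zv ^+ 2 * de f.
Definition l2 (f : F) := Zv * de f.
Lemma rel21 h : l2 (l1 h) = l1 (l2 h) + l1 h.
Proof. rewrite /l1 /l2 !deM ?deX deZ /=. ring. Qed.
Lemma rel32 h : de (l2 h) = l2 (de h) + de h.
Proof. rewrite /l2 !deM deZ /=. ring. Qed.
Lemma rel31 h : de (l1 h) = l1 (de h) + l2 h *+ 2.
Proof. rewrite /l1 /l2 !deM ?deX deZ /=. ring. Qed.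
End Derivation.

Section Gen.
Variables (C F : fieldType) (cst : C -> F) (d1 d2 : F -> F) (Z W : F).

Definition gOp := F -> F.
Definition gmulop (a : F) : gOp := fun f => a * f.
Definition gop_add (D1 D2 : gOp) : gOp := fun f => D1 f + D2 f.
Definition gop_scale (c : C) (D : gOp) : gOp := fun f => cst c * D f.
Definition gop_comp (D1 D2 : gOp) : gOp := fun f => D1 (D2 f).
Definition gop_id : gOp := fun f => f.

Inductive galg_gen (G : gOp -> Prop) : gOp -> Prop :=
| gag_base D : G D -> galg_gen G D
| gag_id : galg_gen G gop_id
| gag_add D1 D2 : galg_gen G D1 -> galg_gen G D2 -> galg_gen G (gop_add D1 D2)
| gag_scale c D : galg_gen G D -> galg_gen G (gop_scale c D)
| gag_comp D1 D2 : galg_gen G D1 -> galg_gen G D2 -> galg_gen G (gop_comp D1 D2).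

Definition gis_diffop (D : gOp) : Prop :=
  galg_gen (fun E => (exists a, E = gmulop a) \/ E = d1 \/ E = d2) D.

Definition gin_An (n : nat) (V : F) : Prop :=
  exists c : nat -> nat -> C,
    V = \sum_(p < n.+1) \sum_(q < n.+1 | ((p : nat), (q : nat)) != (n, n))
          cst (c p q) * (Z ^+ p * W ^+ q / (Z - W) ^+ n).

Definition gin_A (V : F) : Prop :=
  exists (N : nat) (Vs : nat -> F),
    (forall n, gin_An n (Vs n)) /\ V = \sum_(n < N) Vs n.

Definition gL1 : gOp := fun f => Z ^+ 2 * d1 f.
Definition gL2 : gOp := fun f => Z * d1 f.
Definition gL3 : gOp := d1.
Definition gL1b : gOp := fun f => W ^+ 2 * d2 f.
Definition gL2b : gOp := fun f => W * d2 f.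
Definition gL3b : gOp := d2.

Definition gmonomial_op (a b g a' b' g' : nat) : gOp :=
  fun f => iter a gL1 (iter b gL2 (iter g gL3
             (iter a' gL1b (iter b' gL2b (iter g' gL3b f))))).

Definition gin_B (D : gOp) : Prop :=
  exists s : seq (nat * nat * nat * nat * nat * nat * F),
    (forall t, t \in s -> gin_A t.2) /\
    D = fun f => \sum_(t <- s)
          t.2 * gmonomial_op t.1.1.1.1.1.1 t.1.1.1.1.1.2 t.1.1.1.1.2
                            t.1.1.1.2 t.1.1.2 t.1.2 f.

Definition gB_gens (D : gOp) : Prop :=
  D = gmulop (1 / (Z - W)) \/ D = gL1 \/ D = gL2 \/ D = gL3 \/
  D = gL1b \/ D = gL2b \/ D = gL3b.

Hypothesis cstD : forall a b, cst (a + b) = cst a + cst b.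
Hypothesis cstM : forall a b, cst (a * b) = cst a * cst b.
Hypothesis cst1 : cst 1 = 1.
Hypothesis two_neq0 : (2%:R : C) != 0.
Hypothesis d1D : forall a b, d1 (a + b) = d1 a + d1 b.
Hypothesis d1M : forall a b, d1 (a * b) = d1 a * b + a * d1 b.
Hypothesis d2D : forall a b, d2 (a + b) = d2 a + d2 b.
Hypothesis d2M : forall a b, d2 (a * b) = d2 a * b + a * d2 b.
Hypothesis d1C : forall c, d1 (cst c) = 0.
Hypothesis d2C : forall c, d2 (cst c) = 0.
Hypothesis d1Z : d1 Z = 1.
Hypothesis d1W : d1 W = 0.
Hypothesis d2Z : d2 Z = 0.
Hypothesis d2W : d2 W = 1.
Hypothesis d12 : forall f, d1 (d2 f) = d2 (d1 f).
Hypothesis ZW : Z - W != 0.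


Lemma cst0 : cst 0 = 0.
Proof. have h := cstD 0 0. rewrite addr0 in h. by apply: (@addrI _ (cst 0)); rewrite addr0 -h. Qed.
Lemma cstN c : cst (- c) = - cst c.
Proof. apply/eqP; rewrite -addr_eq0 -cstD addNr cst0 //. Qed.
Lemma cst_nat k : cst k%:R = k%:R.
Proof. elim: k => [|k IH]; first exact: cst0. by rewrite -addn1 !natrD cstD IH cst1. Qed.

Lemma d1_0 : d1 0 = 0. Proof. exact: (@de0 F d1 d1D). Qed.
Lemma d2_0 : d2 0 = 0. Proof. exact: (@de0 F d2 d2D). Qed.
Lemma d1N a : d1 (- a) = - d1 a. Proof. exact: (@deN F d1 d1D a). Qed.
Lemma d2N a : d2 (- a) = - d2 a. Proof. exact: (@deN F d2 d2D a). Qed.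
Lemma d1B a b : d1 (a - b) = d1 a - d1 b. Proof. exact: (@deB F d1 d1D a b). Qed.
Lemma d2B a b : d2 (a - b) = d2 a - d2 b. Proof. exact: (@deB F d2 d2D a b). Qed.
Lemma d1Mn a k : d1 (a *+ k) = d1 a *+ k. Proof. exact: (@deMn F d1 d1D a k). Qed.
Lemma d2Mn a k : d2 (a *+ k) = d2 a *+ k. Proof. exact: (@deMn F d2 d2D a k). Qed.
Lemma d1cst c f : d1 (cst c * f) = cst c * d1 f. Proof. exact: (@deC F d1 d1M _ f (d1C c)). Qed.
Lemma d2cst c f : d2 (cst c * f) = cst c * d2 f. Proof. exact: (@deC F d2 d2M _ f (d2C c)). Qed.

Definition u := (Z - W)^-1.
Lemma ZWu : (Z - W) * u = 1. Proof. exact: mulfV ZW. Qed.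
Lemma u_neq0 : u != 0. Proof. by rewrite invr_eq0. Qed.

Definition mon n p q := Z ^+ p * W ^+ q * u ^+ n.
Lemma mon_def n p q : Z ^+ p * W ^+ q / (Z - W) ^+ n = mon n p q.
Proof. by rewrite /mon /u exprVn. Qed.

Lemma mon_split n p q : mon n p q = mon n.+1 p.+1 q - mon n.+1 p q.+1.
Proof.
rewrite /mon !exprS.
have h := ZWu.
move: (Z ^+ p) (W ^+ q) (u ^+ n) h => a b c h.
transitivity (a * b * c * ((Z - W) * u)); first by rewrite h mulr1.
ring.
Qed.

Lemma mon_mul n p q m p' q' : mon n p q * mon m p' q' = mon (n + m) (p + p') (q + q').
Proof.
rewrite /mon !exprD. move: (Z ^+ p) (W ^+ q) (u ^+ n) (Z ^+ p') (W ^+ q') (u ^+ m) => *. ring.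
Qed.

Inductive inA : F -> Prop :=
| inA0 : inA 0
| inAc c n p q V : (p <= n)%N -> (q <= n)%N -> inA V -> inA (cst c * mon n p q + V).

Lemma inA_add a b : inA a -> inA b -> inA (a + b).
Proof.
elim=> [|c n p q V hp hq _ IH] hb; first by rewrite add0r.
rewrite -addrA. apply: inAc => //. exact: IH.
Qed.

Lemma inA_scale c a : inA a -> inA (cst c * a).
Proof.
elim=> [|c' n p q V hp hq _ IH]; first by rewrite mulr0; exact: inA0.
rewrite mulrDr mulrA -cstM. exact: inAc.
Qed.

Lemma inA_opp a : inA a -> inA (- a).
Proof. move=> h. rewrite -mulN1r -cst1 -cstN. exact: inA_scale. Qed.

Lemma inA_sub a b : inA a -> inA b -> inA (a - b).
Proof. move=> ha hb. apply: inA_add ha (inA_opp hb). Qed.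

Lemma inA_natmul a k : inA a -> inA (a *+ k).
Proof. move=> h; elim: k => [|k IH]; first by rewrite mulr0n; exact: inA0. rewrite mulrS. exact: inA_add. Qed.

Lemma inA_mon n p q : (p <= n)%N -> (q <= n)%N -> inA (mon n p q).
Proof. move=> hp hq. rewrite -[mon _ _ _]addr0 -[mon _ _ _]mul1r -cst1. apply: inAc => //. exact: inA0. Qed.

Lemma inA_mul a b : inA a -> inA b -> inA (a * b).
Proof.
elim=> [|c n p q V hp hq _ IH] hb; first by rewrite mul0r; exact: inA0.
rewrite mulrDl. apply: inA_add; last exact: IH.
elim: hb => [|c' m p' q' V' hp' hq' _ IH']; first by rewrite mulr0; exact: inA0.
rewrite mulrDr. apply: inA_add => //.
have -> : cst c * mon n p q * (cst c' * mon m p' q') = cst (c * c') * mon (n + m) (p + p') (q + q').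
  by rewrite cstM -mon_mul; move: (cst c) (cst c') (mon n p q) (mon m p' q') => *; ring.
apply: inA_scale. apply: inA_mon; by rewrite leq_add.
Qed.

Lemma inA_1 : inA 1.
Proof.
have -> : 1 = mon 1 1 0 - mon 1 0 1.
  rewrite -ZWu /mon !expr1 !expr0. ring.
apply: inA_sub; exact: inA_mon.
Qed.

Lemma inA_u : inA u.
Proof. have -> : u = mon 1 0 0 by rewrite /mon !expr0 expr1 !mul1r. exact: inA_mon. Qed.

Lemma inA_sum (I : Type) (r : seq I) (P : pred I) (G : I -> F) :
  (forall i, P i -> inA (G i)) -> inA (\sum_(i <- r | P i) G i).
Proof. move=> h. apply: (big_ind inA) => //; [exact: inA0 | exact: inA_add]. Qed.

Lemma inA_lin (phi : F -> F) :
  (forall a b, phi (a + b) = phi a + phi b) ->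
  (forall c a, phi (cst c * a) = cst c * phi a) ->
  (forall n p q, (p <= n)%N -> (q <= n)%N -> inA (phi (mon n p q))) ->
  forall V, inA V -> inA (phi V).
Proof.
move=> hD hC hM V; elim=> [|c n p q V' hp hq _ IH].
  rewrite (@de0 F phi hD). exact: inA0.
rewrite hD hC. apply: inA_add => //. apply: inA_scale. exact: hM.
Qed.


Lemma gA_inA V : gin_A V -> inA V.
Proof.
case=> N [Vs [hVs ->]]. apply: inA_sum => n _.
have [c ->] := hVs n. apply: inA_sum => p _. apply: inA_sum => q _.
rewrite mon_def. apply: inA_scale. apply: inA_mon; rewrite -ltnS; exact: ltn_ord.
Qed.

Lemma gAn0 n : gin_An n 0.
Proof.
exists (fun _ _ => 0). symmetry. apply: big1 => p _. apply: big1 => q _.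
by rewrite cst0 mul0r.
Qed.

Lemma gA_An n V : gin_An n V -> gin_A V.
Proof.
move=> h. exists n.+1, (fun k => if k == n then V else 0). split.
  move=> k. case: eqP => [-> | _]; [exact: h | exact: gAn0].
rewrite big_ord_recr /= eqxx big1 ?add0r // => i _.
by rewrite ifN // neq_ltn ltn_ord.
Qed.

Lemma gAn_add n a b : gin_An n a -> gin_An n b -> gin_An n (a + b).
Proof.
case=> c1 -> [c2 ->]. exists (fun p q => c1 p q + c2 p q).
rewrite -big_split; apply: eq_bigr => p _. rewrite -big_split; apply: eq_bigr => q _.
by rewrite cstD mulrDl.
Qed.

Lemma sum_pad (G : nat -> F) M N : (M <= N)%N ->
  \sum_(k < N) (if (k < M)%N then G k else 0) = \sum_(k < M) G k.
Proof. move=> h. by rewrite [RHS](big_ord_widen _ _ h) [RHS]big_mkcond. Qed.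

Lemma gA_add a b : gin_A a -> gin_A b -> gin_A (a + b).
Proof.
case=> N1 [Vs1 [h1 ->]] [N2 [Vs2 [h2 ->]]].
exists (N1 + N2)%N, (fun k => (if (k < N1)%N then Vs1 k else 0) + (if (k < N2)%N then Vs2 k else 0)). split.
  move=> k. apply: gAn_add; (case: ifP => _; [exact: h1 || exact: h2 | exact: gAn0]).
rewrite big_split /= !sum_pad // ?leq_addr ?leq_addl //.
Qed.

Lemma gAn_single c n p q : (p <= n)%N -> (q <= n)%N -> (p, q) != (n, n) ->
  gin_An n (cst c * mon n p q).
Proof.
move=> hp hq hpq.
exists (fun p' q' => if (p' == p) && (q' == q) then c else 0).
have hp' : (p < n.+1)%N by []. have hq' : (q < n.+1)%N by [].
rewrite (bigD1 (Ordinal hp')) //= (bigD1 (Ordinal hq')) //= !eqxx /= mon_def.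
rewrite big1 ?addr0; last first.
  move=> j /andP [_ hj].
  have -> : ((j : nat) == q) = false.
    apply/negbTE; apply: contra hj => /eqP hj'. apply/eqP/val_inj. exact: hj'.
  by rewrite cst0 mul0r.
rewrite big1 ?addr0 // => i hi. apply: big1 => j _.
have -> : ((i : nat) == p) = false.
  apply/negbTE; apply: contra hi => /eqP hi'. apply/eqP/val_inj. exact: hi'.
by rewrite /= cst0 mul0r.
Qed.

Lemma gA_term c n p q : (p <= n)%N -> (q <= n)%N -> gin_A (cst c * mon n p q).
Proof.
move=> hp hq.
case hpq: ((p, q) == (n, n)); last first.
  apply: gA_An. apply: gAn_single => //. by rewrite hpq.
move/eqP: hpq => [-> ->].
rewrite mon_split mulrBr -mulNr -cstN.
apply: gA_add; apply: gA_An; apply: gAn_single => //.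
- apply/eqP => -[] h. by have := n_Sn n.
- apply/eqP => -[] h. by have := n_Sn n.
Qed.

Lemma inA_gA V : inA V -> gin_A V.
Proof.
elim=> [|c n p q V' hp hq _ IH].
  exists 0%N, (fun _ => 0). split; [move=> n; exact: gAn0 | by rewrite big_ord0].
apply: gA_add => //. exact: gA_term.
Qed.


Lemma d1_1 : d1 1 = 0. Proof. exact: (@de1 F d1 d1M). Qed.
Lemma d2_1 : d2 1 = 0. Proof. exact: (@de1 F d2 d2M). Qed.

Lemma Zd1Zp p : Z * d1 (Z ^+ p) = Z ^+ p *+ p.
Proof.
rewrite (@deX F d1 d1M) d1Z mulr1. case: p => [|p] /=; first by rewrite !mulr0n mulr0.
by rewrite mulrnAr -exprS.
Qed.
Lemma d1Zp p : d1 (Z ^+ p.+1) = Z ^+ p *+ p.+1.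
Proof. by rewrite (@deX F d1 d1M) d1Z mulr1. Qed.
Lemma d1Wq q : d1 (W ^+ q) = 0.
Proof. by rewrite (@deX F d1 d1M) d1W mulr0 mul0rn. Qed.
Lemma d2Wp q : W * d2 (W ^+ q) = W ^+ q *+ q.
Proof.
rewrite (@deX F d2 d2M) d2W mulr1. case: q => [|q] /=; first by rewrite !mulr0n mulr0.
by rewrite mulrnAr -exprS.
Qed.
Lemma d2Wq q : d2 (W ^+ q.+1) = W ^+ q *+ q.+1.
Proof. by rewrite (@deX F d2 d2M) d2W mulr1. Qed.
Lemma d2Zp p : d2 (Z ^+ p) = 0.
Proof. by rewrite (@deX F d2 d2M) d2Z mulr0 mul0rn. Qed.

Lemma d1u : d1 u = - u ^+ 2.
Proof. rewrite /u (@deV F d1 d1M _ ZW) -/u d1B d1Z d1W subr0 mulr1. done. Qed.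
Lemma d2u : d2 u = u ^+ 2.
Proof. rewrite /u (@deV F d2 d2M _ ZW) -/u d2B d2Z d2W sub0r mulrN mulr1 opprK. done. Qed.

Lemma d1un n : d1 (u ^+ n) = - (u ^+ n.+1 *+ n).
Proof.
rewrite (@deX F d1 d1M) d1u. case: n => [|n] /=; first by rewrite !mulr0n oppr0.
rewrite mulrN mulNrn -exprD addn2. done.
Qed.
Lemma d2un n : d2 (u ^+ n) = u ^+ n.+1 *+ n.
Proof.
rewrite (@deX F d2 d2M) d2u. case: n => [|n] /=; first by rewrite !mulr0n.
rewrite -exprD addn2. done.
Qed.

Lemma d1mon n p q : d1 (mon n p q) = d1 (Z ^+ p) * W ^+ q * u ^+ n - Z ^+ p * W ^+ q * u ^+ n.+1 *+ n.
Proof.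
rewrite /mon !d1M d1Wq d1un.
move: (d1 (Z ^+ p)) (Z ^+ p) (W ^+ q) (u ^+ n) (u ^+ n.+1) => A a b c e. ring.
Qed.
Lemma d2mon n p q : d2 (mon n p q) = Z ^+ p * d2 (W ^+ q) * u ^+ n + Z ^+ p * W ^+ q * u ^+ n.+1 *+ n.
Proof.
rewrite /mon !d2M d2Zp d2un.
move: (d2 (W ^+ q)) (Z ^+ p) (W ^+ q) (u ^+ n) (u ^+ n.+1) => A a b c e. ring.
Qed.

Lemma Zmon n p q : Z * mon n p q = mon n p.+1 q.
Proof. rewrite /mon exprS. move: (Z ^+ p) (W ^+ q) (u ^+ n) => a b c. ring. Qed.
Lemma Wmon n p q : W * mon n p q = mon n p q.+1.
Proof. rewrite /mon exprS. move: (Z ^+ p) (W ^+ q) (u ^+ n) => a b c. ring. Qed.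

Lemma L2mon n p q : Z * d1 (mon n p q) = mon n p q *+ p - mon n.+1 p.+1 q *+ n.
Proof.
rewrite d1mon.
have -> : forall A a b c e : F, Z * (A * b * c - a * b * e *+ n) = (Z * A) * b * c - (Z * a) * b * e *+ n.
  move=> *; ring.
rewrite Zd1Zp -exprS /mon.
move: (Z ^+ p) (Z ^+ p.+1) (W ^+ q) (u ^+ n) (u ^+ n.+1) => *. ring.
Qed.

Lemma L3mon n p q : d1 (mon n p q) = (if p is p'.+1 then mon n p' q *+ p else 0) - mon n.+1 p q *+ n.
Proof.
rewrite d1mon. case: p => [|p].
  rewrite expr0 d1_1 /mon expr0. move: (W ^+ q) (u ^+ n) (u ^+ n.+1) => *. ring.
rewrite d1Zp /mon. move: (Z ^+ p) (Z ^+ p.+1) (W ^+ q) (u ^+ n) (u ^+ n.+1) => *. ring.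
Qed.

Lemma L2bmon n p q : W * d2 (mon n p q) = mon n p q *+ q + mon n.+1 p q.+1 *+ n.
Proof.
rewrite d2mon.
have -> : forall A a b c e : F, W * (a * A * c + a * b * e *+ n) = a * (W * A) * c + a * (W * b) * e *+ n.
  move=> *; ring.
rewrite d2Wp -exprS /mon.
move: (Z ^+ p) (W ^+ q.+1) (W ^+ q) (u ^+ n) (u ^+ n.+1) => *. ring.
Qed.

Lemma L3bmon n p q : d2 (mon n p q) = (if q is q'.+1 then mon n p q' *+ q else 0) + mon n.+1 p q *+ n.
Proof.
rewrite d2mon. case: q => [|q].
  rewrite expr0 d2_1 /mon expr0. move: (Z ^+ p) (u ^+ n) (u ^+ n.+1) => *. ring.
rewrite d2Wq /mon. move: (Z ^+ p) (W ^+ q) (W ^+ q.+1) (u ^+ n) (u ^+ n.+1) => *. ring.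
Qed.

Lemma inA_L3 V : inA V -> inA (d1 V).
Proof.
apply: inA_lin; [exact: d1D | exact: d1cst |].
move=> n p q hp hq. rewrite L3mon. apply: inA_sub; last first.
  apply: inA_natmul; apply: inA_mon => //; exact: leqW.
case: p hp => [|p] hp; first exact: inA0.
apply: inA_natmul; apply: inA_mon => //; exact: ltnW.
Qed.

Lemma inA_L2 V : inA V -> inA (Z * d1 V).
Proof.
apply: (@inA_lin (fun f => Z * d1 f)); [move=> a b; by rewrite d1D mulrDr | move=> c a; by rewrite d1cst mulrCA |].
move=> n p q hp hq. rewrite L2mon. apply: inA_sub; apply: inA_natmul; apply: inA_mon => //; exact: leqW.
Qed.

Lemma inA_L1 V : inA V -> inA (Z ^+ 2 * d1 V).
Proof.
apply: (@inA_lin (fun f => Z ^+ 2 * d1 f)); [move=> a b; by rewrite d1D mulrDr | move=> c a; by rewrite d1cst mulrCA |].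
move=> n p q hp hq. rewrite expr2 -mulrA L2mon mulrBr !mulrnAr !Zmon.
case: (ltngtP p n) hp => [hpn | hpn | ->] hp.
- apply: inA_sub; apply: inA_natmul; apply: inA_mon => //; exact: leqW.
- by [].
rewrite (mon_split n n.+1 q).
have -> : forall a b : F, (a - b) *+ n - a *+ n = - (b *+ n) by move=> *; rewrite mulrnBl addrAC subrr add0r.
apply: inA_opp; apply: inA_natmul; apply: inA_mon => //.
Qed.

Lemma inA_L3b V : inA V -> inA (d2 V).
Proof.
apply: inA_lin; [exact: d2D | exact: d2cst |].
move=> n p q hp hq. rewrite L3bmon. apply: inA_add; last first.
  apply: inA_natmul; apply: inA_mon => //; exact: leqW.
case: q hq => [|q] hq; first exact: inA0.
apply: inA_natmul; apply: inA_mon => //; exact: ltnW.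
Qed.

Lemma inA_L2b V : inA V -> inA (W * d2 V).
Proof.
apply: (@inA_lin (fun f => W * d2 f)); [move=> a b; by rewrite d2D mulrDr | move=> c a; by rewrite d2cst mulrCA |].
move=> n p q hp hq. rewrite L2bmon. apply: inA_add; apply: inA_natmul; apply: inA_mon => //; exact: leqW.
Qed.

Lemma inA_L1b V : inA V -> inA (W ^+ 2 * d2 V).
Proof.
apply: (@inA_lin (fun f => W ^+ 2 * d2 f)); [move=> a b; by rewrite d2D mulrDr | move=> c a; by rewrite d2cst mulrCA |].
move=> n p q hp hq. rewrite expr2 -mulrA L2bmon mulrDr !mulrnAr !Wmon.
case: (ltngtP q n) hq => [hqn | hqn | ->] hq.
- apply: inA_add; apply: inA_natmul; apply: inA_mon => //; exact: leqW.
- by [].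
rewrite (mon_split n p n.+1).
have -> : forall a b : F, (a - b) *+ n + b *+ n = a *+ n by move=> *; rewrite mulrnBl subrK.
apply: inA_natmul; apply: inA_mon => //.
Qed.


Inductive LS (P : gOp -> Prop) : gOp -> Prop :=
| LS0 : LS P (fun _ => 0)
| LSc c K D : P K -> LS P D -> LS P (fun f => cst c * K f + D f).

Lemma LS_add P D1 D2 : LS P D1 -> LS P D2 -> LS P (fun f => D1 f + D2 f).
Proof.
elim=> [|c K D hK _ IH] h2.
  have -> : (fun f => 0 + D2 f) = D2 by apply: functional_extensionality => f; rewrite add0r.
  exact: h2.
have -> : (fun f => cst c * K f + D f + D2 f) = (fun f => cst c * K f + (D f + D2 f)).
  by apply: functional_extensionality => f; rewrite addrA.
apply: LSc => //. exact: IH.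
Qed.

Lemma LS_scale P c D : LS P D -> LS P (fun f => cst c * D f).
Proof.
elim=> [|c' K D' hK _ IH].
  have -> : (fun f : F => cst c * 0) = (fun _ => 0) by apply: functional_extensionality => f; rewrite mulr0.
  exact: LS0.
have -> : (fun f => cst c * (cst c' * K f + D' f)) = (fun f => cst (c * c') * K f + cst c * D' f).
  by apply: functional_extensionality => f; rewrite mulrDr mulrA cstM.
exact: LSc.
Qed.

Lemma LS_natmul P k D : LS P D -> LS P (fun f => D f *+ k).
Proof.
move=> h. have -> : (fun f => D f *+ k) = (fun f => cst k%:R * D f).
  by apply: functional_extensionality => f; rewrite cst_nat mulr_natl.
exact: LS_scale.
Qed.

Lemma LS_elem P K : P K -> LS P K.
Proof.
move=> h. have -> : K = (fun f => cst 1 * K f + (fun _ => 0) f).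
  by apply: functional_extensionality => f; rewrite cst1 mul1r addr0.
apply: LSc => //. exact: LS0.
Qed.

Definition glinear (L : F -> F) := (forall a b, L (a + b) = L a + L b) /\ (forall c a, L (cst c * a) = cst c * L a).

Lemma LS_map P Q (L : F -> F) D : glinear L -> (forall K, P K -> LS Q (fun f => L (K f))) ->
  LS P D -> LS Q (fun f => L (D f)).
Proof.
move=> [hD hC] hK. elim=> [|c K D' hK' _ IH].
  have -> : (fun f : F => L 0) = (fun _ => 0) by apply: functional_extensionality => f; exact: (@de0 F L hD).
  exact: LS0.
have -> : (fun f => L (cst c * K f + D' f)) = (fun f => cst c * L (K f) + L (D' f)).
  by apply: functional_extensionality => f; rewrite hD hC.
apply: LS_add => //. apply: LS_scale. exact: hK.
Qed.

Lemma LS_sub P Q D : (forall K, P K -> Q K) -> LS P D -> LS Q D.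
Proof. move=> h; elim=> [|c K D' hK _ IH]; [exact: LS0 | apply: LSc => //; exact: h]. Qed.

Lemma glinear_iter L n : glinear L -> glinear (iter n L).
Proof.
move=> [hD hC]; split.
  elim: n => [//|n IH] a b /=. by rewrite IH hD.
elim: n => [//|n IH] c a /=. by rewrite IH hC.
Qed.

Lemma glinear_Mn L a k : glinear L -> L (a *+ k) = L a *+ k.
Proof. move=> [hD _]. exact: (@deMn F L hD). Qed.

Section Words.
Variable de : F -> F.
Variable Zv : F.
Hypothesis deD : forall a b, de (a + b) = de a + de b.
Hypothesis deM : forall a b, de (a * b) = de a * b + a * de b.
Hypothesis deCs : forall c a, de (cst c * a) = cst c * de a.
Hypothesis deZ : de Zv = 1.
Variable X : gOp.

Definition word a b g : gOp := fun f => iter a (l1 de Zv) (iter b (l2 de Zv) (iter g de (X f))).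
Definition Pw K := exists a b g, K = word a b g.

Lemma lin_de : glinear de. Proof. by split. Qed.
Lemma lin_l1 : glinear (l1 de Zv).
Proof. split; move=> *; rewrite /l1 ?deD ?deCs; ring. Qed.
Lemma lin_l2 : glinear (l2 de Zv).
Proof. split; move=> *; rewrite /l2 ?deD ?deCs; ring. Qed.

Lemma W2 a h : l2 de Zv (iter a (l1 de Zv) h) = iter a (l1 de Zv) (l2 de Zv h) + iter a (l1 de Zv) h *+ a.
Proof.
elim: a => [|a IH] /=; first by rewrite mulr0n addr0.
rewrite (rel21 deM deZ) IH (proj1 lin_l1) (glinear_Mn _ _ lin_l1) mulrSr addrA. done.
Qed.

Lemma CL1 D : LS Pw D -> LS Pw (fun f => l1 de Zv (D f)).
Proof.
apply: LS_map; first exact: lin_l1.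
move=> K [a [b [g ->]]]. apply: LS_elem. by exists a.+1, b, g.
Qed.

Lemma CL2 D : LS Pw D -> LS Pw (fun f => l2 de Zv (D f)).
Proof.
apply: LS_map; first exact: lin_l2.
move=> K [a [b [g ->]]].
have -> : (fun f => l2 de Zv (word a b g f)) = (fun f => word a b.+1 g f + word a b g f *+ a).
  apply: functional_extensionality => f. by rewrite /word W2.
apply: LS_add; last apply: LS_natmul; apply: LS_elem; [by exists a, b.+1, g | by exists a, b, g].
Qed.

Lemma CL3w a b g : LS Pw (fun f => de (word a b g f)).
Proof.
elim: a b g => [|a IHa] b g.
  elim: b g => [|b IHb] g.
    apply: LS_elem. by exists 0%N, 0%N, g.+1.
  have -> : (fun f => de (word 0 b.+1 g f)) = (fun f => l2 de Zv (de (word 0 b g f)) + de (word 0 b g f)).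
    apply: functional_extensionality => f. by rewrite /word /= (rel32 deM deZ).
  apply: LS_add; [apply: CL2; exact: IHb | exact: IHb].
have -> : (fun f => de (word a.+1 b g f)) = (fun f => l1 de Zv (de (word a b g f)) + l2 de Zv (word a b g f) *+ 2).
  apply: functional_extensionality => f. by rewrite /word /= (rel31 deM deZ).
apply: LS_add; first by apply: CL1; exact: IHa.
apply: LS_natmul. apply: CL2. apply: LS_elem. by exists a, b, g.
Qed.

Lemma CL3 D : LS Pw D -> LS Pw (fun f => de (D f)).
Proof.
apply: LS_map; first exact: lin_de.
move=> K [a [b [g ->]]]. exact: CL3w.
Qed.
End Words.


Definition Pm K := exists a b g a' b' g', K = gmonomial_op a b g a' b' g'.
Definition Tb a' b' g' : gOp := fun f => iter a' gL1b (iter b' gL2b (iter g' gL3b f)).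
Definition Tu a b g (y : F) : F := iter a gL1 (iter b gL2 (iter g gL3 y)).

Lemma d1cs c a : d1 (cst c * a) = cst c * d1 a. Proof. exact: d1cst. Qed.
Lemma d2cs c a : d2 (cst c * a) = cst c * d2 a. Proof. exact: d2cst. Qed.

Lemma lin_Tu a b g : glinear (Tu a b g).
Proof.
have h1 := lin_l1 Z d1D d1cs. have h2 := lin_l2 Z d1D d1cs. have h3 := lin_de d1D d1cs.
split.
- move=> x y. rewrite /Tu (proj1 (glinear_iter g h3)) (proj1 (glinear_iter b h2)).
  exact: (proj1 (glinear_iter a h1)).
- move=> c x. rewrite /Tu (proj2 (glinear_iter g h3)) (proj2 (glinear_iter b h2)).
  exact: (proj2 (glinear_iter a h1)).
Qed.

Lemma CS_unbar (L : F -> F) : (L = gL1 \/ L = gL2 \/ L = gL3) ->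
  forall D, LS Pm D -> LS Pm (fun f => L (D f)).
Proof.
move=> hL.
have hlin : glinear L.
  case: hL => [->|[->|->]]; [exact: (lin_l1 Z d1D d1cs) | exact: (lin_l2 Z d1D d1cs) | exact: (lin_de d1D d1cs)].
move=> D; apply: (@LS_map Pm Pm L D hlin) => K [a [b [g [a' [b' [g' ->]]]]]].
have E : gmonomial_op a b g a' b' g' = word d1 Z (Tb a' b' g') a b g by [].
rewrite E.
have h : LS (Pw d1 Z (Tb a' b' g')) (fun f => L (word d1 Z (Tb a' b' g') a b g f)).
  have h0 : LS (Pw d1 Z (Tb a' b' g')) (word d1 Z (Tb a' b' g') a b g).
    apply: LS_elem. by exists a, b, g.
  case: hL => [->|[->|->]].
  - exact: (CL1 d1D d1cs h0).
  - exact: (CL2 d1D d1M d1cs d1Z h0).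
  - exact: (CL3 d1D d1M d1cs d1Z h0).
apply: (LS_sub _ h) => K' [a2 [b2 [g2 ->]]]. by exists a2, b2, g2, a', b', g'.
Qed.

Lemma comm_gen (l lb : F -> F) (A B : F) : (forall f, l f = A * d1 f) -> (forall f, lb f = B * d2 f) ->
  d2 A = 0 -> d1 B = 0 -> forall f, lb (l f) = l (lb f).
Proof.
move=> hl hlb hA hB f. rewrite hl hlb hl hlb !d1M !d2M hA hB d12.
move: (d2 (d1 f)) (d1 f) (d2 f) => *. ring.
Qed.

Lemma comm_iter (l lb : F -> F) n : (forall f, lb (l f) = l (lb f)) -> forall f, lb (iter n l f) = iter n l (lb f).
Proof. move=> h; elim: n => [//|n IH] f /=. by rewrite h IH. Qed.

Lemma comm_Tu (lb : F -> F) B : (forall f, lb f = B * d2 f) -> d1 B = 0 ->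
  forall a b g y, lb (Tu a b g y) = Tu a b g (lb y).
Proof.
move=> hlb hB a b g y. rewrite /Tu.
have c1 : forall f, lb (gL1 f) = gL1 (lb f).
  apply: (comm_gen (A := Z ^+ 2)) hlb _ hB => //. by rewrite (@deX F d2 d2M) d2Z mulr0 mul0rn.
have c2 : forall f, lb (gL2 f) = gL2 (lb f).
  by apply: (comm_gen (A := Z)) hlb _ hB.
have c3 : forall f, lb (gL3 f) = gL3 (lb f).
  apply: (comm_gen (A := 1)) hlb _ hB => //; [move=> f; by rewrite mul1r | exact: d2_1].
by rewrite (comm_iter _ c1) (comm_iter _ c2) (comm_iter _ c3).
Qed.

Lemma CS_bar (L : F -> F) : (L = gL1b \/ L = gL2b \/ L = gL3b) ->
  forall D, LS Pm D -> LS Pm (fun f => L (D f)).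
Proof.
move=> hL.
have [B [hB hB0]] : exists B, (forall f, L f = B * d2 f) /\ d1 B = 0.
  case: hL => [->|[->|->]].
  - exists (W ^+ 2); split => //. by rewrite (@deX F d1 d1M) d1W mulr0 mul0rn.
  - by exists W.
  - exists 1; split; [move=> f; by rewrite mul1r | exact: d1_1].
have hlin : glinear L.
  case: hL => [->|[->|->]]; [exact: (lin_l1 W d2D d2cs) | exact: (lin_l2 W d2D d2cs) | exact: (lin_de d2D d2cs)].
move=> D; apply: (@LS_map Pm Pm L D hlin) => K [a [b [g [a' [b' [g' ->]]]]]].
have E : (fun f => L (gmonomial_op a b g a' b' g' f)) = (fun f => Tu a b g (L (word d2 W (fun x => x) a' b' g' f))).
  apply: functional_extensionality => f. rewrite -(comm_Tu hB hB0). by [].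
rewrite E.
have h : LS (Pw d2 W (fun x => x)) (fun f => L (word d2 W (fun x => x) a' b' g' f)).
  have h0 : LS (Pw d2 W (fun x => x)) (word d2 W (fun x => x) a' b' g').
    apply: LS_elem. by exists a', b', g'.
  case: hL hB hB0 hlin => [->|[->|->]] _ _ _.
  - exact: (CL1 d2D d2cs h0).
  - exact: (CL2 d2D d2M d2cs d2W h0).
  - exact: (CL3 d2D d2M d2cs d2W h0).
apply: (LS_map (lin_Tu a b g) _ h) => K' [a2 [b2 [g2 ->]]].
apply: LS_elem. by exists a, b, g, a2, b2, g2.
Qed.

Lemma CS_L (L : F -> F) : (L = gL1 \/ L = gL2 \/ L = gL3 \/ L = gL1b \/ L = gL2b \/ L = gL3b) ->
  forall D, LS Pm D -> LS Pm (fun f => L (D f)).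
Proof.
case=> [h|[h|[h|h]]].
- apply: CS_unbar; by left.
- apply: CS_unbar; by right; left.
- apply: CS_unbar; by right; right.
- apply: CS_bar. case: h => [h|[h|h]]; by [left | right; left | right; right].
Qed.


Inductive inB : gOp -> Prop :=
| inB0 : inB (fun _ => 0)
| inBc V K D : inA V -> Pm K -> inB D -> inB (fun f => V * K f + D f).

Lemma inB_add D1 D2 : inB D1 -> inB D2 -> inB (fun f => D1 f + D2 f).
Proof.
elim=> [|V K D hV hK _ IH] h2.
  have -> : (fun f => 0 + D2 f) = D2 by apply: functional_extensionality => f; rewrite add0r.
  exact: h2.
have -> : (fun f => V * K f + D f + D2 f) = (fun f => V * K f + (D f + D2 f)).
  by apply: functional_extensionality => f; rewrite addrA.
apply: inBc => //. exact: IH.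
Qed.

Lemma inB_mulA A D : inA A -> inB D -> inB (fun f => A * D f).
Proof.
move=> hA. elim=> [|V K D' hV hK _ IH].
  have -> : (fun f : F => A * 0) = (fun _ => 0) by apply: functional_extensionality => f; rewrite mulr0.
  exact: inB0.
have -> : (fun f => A * (V * K f + D' f)) = (fun f => (A * V) * K f + A * D' f).
  by apply: functional_extensionality => f; rewrite mulrDr mulrA.
apply: inBc => //. exact: inA_mul.
Qed.

Lemma inB_scale c D : inB D -> inB (fun f => cst c * D f).
Proof.
apply: inB_mulA.
have -> : cst c = cst c * mon 0 0 0 + 0 by rewrite /mon !expr0 !mulr1 addr0.
apply: inAc => //. exact: inA0.
Qed.

Lemma CS_good K V : LS Pm K -> inA V -> inB (fun f => V * K f).
Proof.
move=> hK hV. elim: hK => [|c K' D hK' _ IH].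
  have -> : (fun f : F => V * 0) = (fun _ => 0) by apply: functional_extensionality => f; rewrite mulr0.
  exact: inB0.
have -> : (fun f => V * (cst c * K' f + D f)) = (fun f => (cst c * V) * K' f + V * D f).
  by apply: functional_extensionality => f; rewrite mulrDr mulrA [V * _]mulrC.
apply: inBc => //. exact: inA_scale.
Qed.

Lemma inB_L (L : F -> F) : (L = gL1 \/ L = gL2 \/ L = gL3 \/ L = gL1b \/ L = gL2b \/ L = gL3b) ->
  forall D, inB D -> inB (fun f => L (D f)).
Proof.
move=> hL.
have hlin : glinear L.
  case: hL => [->|[->|[->|[->|[->|->]]]]];
  [exact: (lin_l1 Z d1D d1cs) | exact: (lin_l2 Z d1D d1cs) | exact: (lin_de d1D d1cs)
  |exact: (lin_l1 W d2D d2cs) | exact: (lin_l2 W d2D d2cs) | exact: (lin_de d2D d2cs)].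
have hLeib : forall a b, L (a * b) = L a * b + a * L b.
  case: hL => [->|[->|[->|[->|[->|->]]]]] a b; rewrite /gL1 /gL2 /gL3 /gL1b /gL2b /gL3b ?d1M ?d2M;
  move: (d1 a) (d2 a) (d1 b) (d2 b) => *; ring.
have hA : forall V, inA V -> inA (L V).
  case: hL => [->|[->|[->|[->|[->|->]]]]];
  [exact: inA_L1 | exact: inA_L2 | exact: inA_L3 | exact: inA_L1b | exact: inA_L2b | exact: inA_L3b].
move=> D0; elim=> [|V K D hV hK _ IH].
  have -> : (fun f : F => L 0) = (fun _ => 0) by apply: functional_extensionality => f; exact: (@de0 F L (proj1 hlin)).
  exact: inB0.
have -> : (fun f => L (V * K f + D f)) = (fun f => L V * K f + (V * L (K f) + L (D f))).
  by apply: functional_extensionality => f; rewrite (proj1 hlin) hLeib addrA.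
apply: inBc => //; first exact: hA.
apply: inB_add => //. apply: CS_good => //.
apply: (CS_L hL). exact: LS_elem.
Qed.

Lemma inB_id : inB gop_id.
Proof.
have -> : gop_id = (fun f => 1 * gmonomial_op 0 0 0 0 0 0 f + (fun _ => 0) f).
  by apply: functional_extensionality => f; rewrite mul1r addr0.
apply: inBc; [exact: inA_1 | by exists 0%N, 0%N, 0%N, 0%N, 0%N, 0%N | exact: inB0].
Qed.

Lemma gB_inB D : gin_B D -> inB D.
Proof.
case=> s [hs ->]. elim: s hs => [|t s IH] hs.
  have -> : (fun f : F => \sum_(t <- [::]) t.2 * gmonomial_op t.1.1.1.1.1.1 t.1.1.1.1.1.2 t.1.1.1.1.2
                            t.1.1.1.2 t.1.1.2 t.1.2 f) = (fun _ => 0).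
    by apply: functional_extensionality => f; rewrite big_nil.
  exact: inB0.
have -> : (fun f : F => \sum_(t0 <- t :: s) t0.2 * gmonomial_op t0.1.1.1.1.1.1 t0.1.1.1.1.1.2 t0.1.1.1.1.2
                            t0.1.1.1.2 t0.1.1.2 t0.1.2 f) =
  (fun f => t.2 * gmonomial_op t.1.1.1.1.1.1 t.1.1.1.1.1.2 t.1.1.1.1.2 t.1.1.1.2 t.1.1.2 t.1.2 f +
     (fun f => \sum_(t0 <- s) t0.2 * gmonomial_op t0.1.1.1.1.1.1 t0.1.1.1.1.1.2 t0.1.1.1.1.2
                            t0.1.1.1.2 t0.1.1.2 t0.1.2 f) f).
  by apply: functional_extensionality => f; rewrite big_cons.
apply: inBc.
- apply: gA_inA. apply: hs. exact: mem_head.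
- by eexists; eexists; eexists; eexists; eexists; eexists.
- apply: IH => t' ht'. apply: hs. by rewrite in_cons ht' orbT.
Qed.

Lemma inB_gB D : inB D -> gin_B D.
Proof.
elim=> [|V K D' hV [a [b [g [a' [b' [g' ->]]]]]] _ [s [hs ->]]].
  exists [::]. split => //. apply: functional_extensionality => f. by rewrite big_nil.
exists ((a, b, g, a', b', g', V) :: s). split.
  move=> t. rewrite in_cons => /orP [/eqP -> | ht]; [exact: inA_gA | exact: hs].
apply: functional_extensionality => f. by rewrite big_cons.
Qed.

Lemma gen_left D1 : galg_gen gB_gens D1 -> forall D2, inB D2 -> inB (gop_comp D1 D2).
Proof.
elim=> [D hD | | D D' _ IH _ IH' | c D _ IH | D D' _ IH _ IH'] D2 h2.
- case: hD => [->|hL].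
    apply: inB_mulA => //. rewrite div1r. exact: inA_u.
  exact: (inB_L hL).
- exact: h2.
- exact: (inB_add (IH _ h2) (IH' _ h2)).
- exact: (inB_scale c (IH _ h2)).
- exact: (IH _ (IH' _ h2)).
Qed.

Lemma gen_iter (G : gOp -> Prop) (L X : gOp) n : galg_gen G L -> galg_gen G X ->
  galg_gen G (fun f => iter n L (X f)).
Proof.
move=> hL hX. elim: n => [|n IH]; first exact: hX.
exact: (gag_comp hL IH).
Qed.

Lemma inB_gen (G : gOp -> Prop) :
  (forall V, inA V -> galg_gen G (gmulop V)) ->
  galg_gen G gL1 -> galg_gen G gL2 -> galg_gen G gL3 ->
  galg_gen G gL1b -> galg_gen G gL2b -> galg_gen G gL3b ->
  forall D, inB D -> galg_gen G D.
Proof.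
move=> hV h1 h2 h3 h4 h5 h6 D0. elim=> [|V K D hV' [a [b [g [a' [b' [g' ->]]]]]] _ IH].
  have -> : (fun _ : F => 0) = gop_scale 0 gop_id.
    by apply: functional_extensionality => f; rewrite /gop_scale cst0 mul0r.
  apply: gag_scale. exact: gag_id.
apply: (gag_add _ IH). apply: (gag_comp (hV _ hV')).
rewrite /gmonomial_op.
apply: gen_iter => //. apply: gen_iter => //. apply: gen_iter => //.
apply: gen_iter => //. apply: gen_iter => //. apply: gen_iter => //. exact: gag_id.
Qed.


Definition Gm V := galg_gen gB_gens (gmulop V).

Lemma Gm_add a b : Gm a -> Gm b -> Gm (a + b).
Proof.
move=> ha hb. rewrite /Gm. have -> : gmulop (a + b) = gop_add (gmulop a) (gmulop b).
  by apply: functional_extensionality => f; rewrite /gmulop /gop_add mulrDl.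
exact: gag_add.
Qed.
Lemma Gm_mul a b : Gm a -> Gm b -> Gm (a * b).
Proof.
move=> ha hb. rewrite /Gm. have -> : gmulop (a * b) = gop_comp (gmulop a) (gmulop b).
  by apply: functional_extensionality => f; rewrite /gmulop /gop_comp mulrA.
exact: gag_comp.
Qed.
Lemma Gm_scale c a : Gm a -> Gm (cst c * a).
Proof.
move=> ha. rewrite /Gm. have -> : gmulop (cst c * a) = gop_scale c (gmulop a).
  by apply: functional_extensionality => f; rewrite /gmulop /gop_scale mulrA.
exact: gag_scale.
Qed.
Lemma Gm_1 : Gm 1.
Proof.
rewrite /Gm.
have -> : gmulop 1 = gop_id by apply: functional_extensionality => f; rewrite /gmulop mul1r.
exact: gag_id.
Qed.
Lemma Gm_opp a : Gm a -> Gm (- a).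
Proof. move=> h. rewrite -mulN1r -cst1 -cstN. exact: Gm_scale. Qed.
Lemma Gm_u : Gm u.
Proof. rewrite /Gm /u -div1r. apply: gag_base. by left. Qed.

Lemma Gm_L (L : F -> F) : gB_gens L -> (forall a b, L (a * b) = L a * b + a * L b) ->
  forall V, Gm V -> Gm (L V).
Proof.
move=> hL hLeib V hV. rewrite /Gm.
have -> : gmulop (L V) = gop_add (gop_comp L (gmulop V)) (gop_scale (-1) (gop_comp (gmulop V) L)).
  apply: functional_extensionality => f.
  by rewrite /gmulop /gop_add /gop_comp /gop_scale hLeib cstN cst1 mulN1r addrK.
apply: gag_add; first exact: (gag_comp (gag_base hL) hV).
apply: gag_scale. exact: (gag_comp hV (gag_base hL)).
Qed.

Lemma L1_Leib a b : gL1 (a * b) = gL1 a * b + a * gL1 b.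
Proof. rewrite /gL1 d1M. move: (d1 a) (d1 b) => *. ring. Qed.
Lemma L1b_Leib a b : gL1b (a * b) = gL1b a * b + a * gL1b b.
Proof. rewrite /gL1b d2M. move: (d2 a) (d2 b) => *. ring. Qed.

Lemma Gm_L1 V : Gm V -> Gm (gL1 V).
Proof. apply: Gm_L; [by right; left | exact: L1_Leib]. Qed.
Lemma Gm_L1b V : Gm V -> Gm (gL1b V).
Proof. apply: Gm_L; [by right; right; right; right; left | exact: L1b_Leib]. Qed.

Lemma Gm_x : Gm (Z * u).
Proof.
have hx2 : Gm ((Z * u) ^+ 2).
  have -> : (Z * u) ^+ 2 = - gL1 u by rewrite /gL1 d1u mulrN opprK exprMn.
  apply: Gm_opp. apply: Gm_L1. exact: Gm_u.
have hy2 : Gm ((W * u) ^+ 2).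
  have -> : (W * u) ^+ 2 = gL1b u by rewrite /gL1b d2u exprMn.
  apply: Gm_L1b. exact: Gm_u.
have -> : Z * u = cst (2%:R^-1) * ((Z * u) ^+ 2 - (W * u) ^+ 2 + 1).
  have e : W * u = Z * u - 1 by rewrite -ZWu; move: u => v; ring.
  rewrite e.
  have -> : (Z * u) ^+ 2 - (Z * u - 1) ^+ 2 + 1 = cst 2%:R * (Z * u).
    rewrite cst_nat. move: (Z * u) => v. ring.
  by rewrite mulrA -cstM mulVf // cst1 mul1r.
apply: Gm_scale. apply: Gm_add; last exact: Gm_1.
apply: Gm_add => //. exact: Gm_opp.
Qed.

Lemma Gm_m : Gm (Z * W * u).
Proof.
have -> : Z * W * u = - (gL1 (Z * u) + gL1b (Z * u)).
  rewrite /gL1 /gL1b !d1M !d2M d1Z d2Z d1u d2u /u.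
  field. exact: ZW.
apply: Gm_opp. apply: Gm_add; [apply: Gm_L1 | apply: Gm_L1b]; exact: Gm_x.
Qed.

Lemma Gm_mon_basic k a b c : Gm (mon (k + a + b + c) (k + a) (k + b)).
Proof.
have hpow : forall p q, Gm (mon 1 p q) -> forall j, Gm (mon (1 * j) (p * j) (q * j)).
  move=> p q h. elim=> [|j IH].
    rewrite !muln0. have -> : mon 0 0 0 = 1 by rewrite /mon !expr0 !mulr1.
    exact: Gm_1.
  have -> : mon (1 * j.+1) (p * j.+1) (q * j.+1) = mon 1 p q * mon (1 * j) (p * j) (q * j).
    by rewrite mon_mul !mulnS.
  exact: (Gm_mul h IH).
have hm : Gm (mon 1 1 1) by rewrite /mon !expr1; exact: Gm_m.
have hx : Gm (mon 1 1 0) by rewrite /mon expr1 expr0 mulr1 expr1; exact: Gm_x.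
have hy : Gm (mon 1 0 1).
  have -> : mon 1 0 1 = Z * u - 1.
    rewrite /mon expr0 !expr1 mul1r -ZWu. move: u => v. ring.
  apply: Gm_add; [exact: Gm_x | apply: Gm_opp; exact: Gm_1].
have hu : Gm (mon 1 0 0) by rewrite /mon !expr0 expr1 !mul1r; exact: Gm_u.
have := Gm_mul (Gm_mul (Gm_mul (hpow _ _ hm k) (hpow _ _ hx a)) (hpow _ _ hy b)) (hpow _ _ hu c).
rewrite !mon_mul !mul1n ?muln1 ?mul0n ?addn0. done.
Qed.

Lemma Gm_mon n p q : (p <= n)%N -> (q <= n)%N -> Gm (mon n p q).
Proof.
move=> hp hq.
case: (leqP (p + q) n) => h.
  have := Gm_mon_basic 0 p q (n - (p + q)).
  have -> : (0 + p + q + (n - (p + q)) = n)%N by lia.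
  by rewrite !add0n.
have := Gm_mon_basic (p + q - n) (n - q) (n - p) 0.
have -> : (p + q - n + (n - q) + (n - p) + 0 = n)%N by lia.
have -> : (p + q - n + (n - q) = p)%N by lia.
have -> : (p + q - n + (n - p) = q)%N by lia.
done.
Qed.

Lemma Gm_A V : inA V -> Gm V.
Proof.
elim=> [|c n p q V' hp hq _ IH].
  have -> : (0 : F) = cst 0 * 1 by rewrite cst0 mul0r.
  apply: Gm_scale. exact: Gm_1.
apply: Gm_add => //. apply: Gm_scale. exact: Gm_mon.
Qed.

Theorem gen_main :
  (forall D, gin_B D -> gis_diffop D) /\
  gin_B gop_id /\
  (forall D1 D2, gin_B D1 -> gin_B D2 -> gin_B (gop_add D1 D2)) /\
  (forall c D, gin_B D -> gin_B (gop_scale c D)) /\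
  (forall D1 D2, gin_B D1 -> gin_B D2 -> gin_B (gop_comp D1 D2)) /\
  (forall D, gin_B D <-> galg_gen gB_gens D).
Proof.
have gB_gen : forall D, inB D -> galg_gen gB_gens D.
  apply: inB_gen.
  - move=> V hV. exact: Gm_A.
  - apply: gag_base. by right; left.
  - apply: gag_base. by right; right; left.
  - apply: gag_base. by right; right; right; left.
  - apply: gag_base. by right; right; right; right; left.
  - apply: gag_base. by right; right; right; right; right; left.
  - apply: gag_base. by right; right; right; right; right; right.
split.
  move=> D /gB_inB. apply: inB_gen.
  - move=> V _. apply: gag_base. left. by exists V.
  - apply: (gag_comp (D1 := gmulop (Z ^+ 2))); apply: gag_base; [left; by eexists | by right; left].
  - apply: (gag_comp (D1 := gmulop Z)); apply: gag_base; [left; by eexists | by right; left].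
  - apply: gag_base. by right; left.
  - apply: (gag_comp (D1 := gmulop (W ^+ 2))); apply: gag_base; [left; by eexists | by right; right].
  - apply: (gag_comp (D1 := gmulop W)); apply: gag_base; [left; by eexists | by right; right].
  - apply: gag_base. by right; right.
split; first exact: (inB_gB inB_id).
split.
  move=> D1 D2 /gB_inB h1 /gB_inB h2. exact: (inB_gB (inB_add h1 h2)).
split.
  move=> c D /gB_inB h. exact: (inB_gB (inB_scale c h)).
split.
  move=> D1 D2 /gB_inB h1 /gB_inB h2. exact: (inB_gB (gen_left (gB_gen _ h1) h2)).
move=> D; split.
  move/gB_inB. exact: gB_gen.
move=> h. exact: (inB_gB (gen_left h inB_id)).
Qed.
End Gen.
Section S.
Variable R : rcfType.
Local Notation C := (R[i])%C.
Local Notation Kf := (Kf R).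
Local Notation Pol := (Pol R).

Lemma pdzD (p q : Pol) : pdz (p + q) = pdz p + pdz q. Proof. exact: derivD. Qed.
Lemma pdzM (p q : Pol) : pdz (p * q) = pdz p * q + p * pdz q. Proof. exact: derivM. Qed.
Lemma pdwD (p q : Pol) : pdw (p + q) = pdw p + pdw q. Proof. apply/polyP => i. by rewrite /pdw coefD !coef_map /= coefD derivD. Qed.
Lemma pdwM (p q : Pol) : pdw (p * q) = pdw p * q + p * pdw q.
Proof.
apply/polyP => i. rewrite /pdw coefD !coefM coef_map /= coefM.
rewrite raddf_sum -big_split /=. apply: eq_bigr => j _.
by rewrite derivM !coef_map.
Qed.
Lemma pdzw (p : Pol) : pdz (pdw p) = pdw (pdz p).
Proof.
apply/polyP => i. rewrite /pdw /pdz coef_deriv !coef_map /= coef_deriv. by rewrite derivMn.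
Qed.

Lemma c_cstD (a b : C) : cst (a + b) = cst a + cst b :> Kf.
Proof. rewrite /cst !polyCD. exact: tD. Qed.
Lemma c_cstM (a b : C) : cst (a * b) = cst a * cst b :> Kf.
Proof. rewrite /cst !polyCM. exact: tM. Qed.
Lemma c_cst1 : cst (1 : C) = 1 :> Kf.
Proof. rewrite /cst. exact: tofrac1. Qed.
Lemma c_two : (2%:R : C) != 0.
Proof. by rewrite pnatr_eq0. Qed.
Lemma c_d1D (a b : Kf) : dz (a + b) = dz a + dz b. Proof. have := (@fd_add R (@pdz R) pdzD pdzM a b). exact. Qed.
Lemma c_d1M (a b : Kf) : dz (a * b) = dz a * b + a * dz b. Proof. exact: (fd_mul pdzM). Qed.
Lemma c_d2D (a b : Kf) : dzb (a + b) = dzb a + dzb b. Proof. exact: (fd_add pdwD pdwM). Qed.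
Lemma c_d2M (a b : Kf) : dzb (a * b) = dzb a * b + a * dzb b. Proof. exact: (fd_mul pdwM). Qed.

Lemma dz_t (p : Pol) : dz (tofrac p) = tofrac (pdz p). Proof. exact: (fd_tofrac pdzM). Qed.
Lemma dzb_t (p : Pol) : dzb (tofrac p) = tofrac (pdw p). Proof. exact: (fd_tofrac pdwM). Qed.
Lemma t0 : tofrac (0 : Pol) = 0 :> Kf. Proof. exact: tofrac0. Qed.
Lemma t1 : tofrac (1 : Pol) = 1 :> Kf. Proof. exact: tofrac1. Qed.

Lemma c_d1C (c : C) : dz (cst c) = 0.
Proof. rewrite /cst dz_t /pdz derivC. exact: t0. Qed.
Lemma c_d2C (c : C) : dzb (cst c) = 0.
Proof.
rewrite /cst dzb_t /pdw.
have -> : map_poly (@deriv _) ((c%:P)%:P : Pol) = 0.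
  rewrite (map_polyC (@deriv _)). apply/eqP; rewrite polyC_eq0; apply/eqP; exact: derivC.
exact: t0.
Qed.
Lemma c_d1Z : dz (@Zf R) = 1.
Proof. rewrite /Zf dz_t /pdz /polZ derivX. exact: t1. Qed.
Lemma c_d1W : dz (@Wf R) = 0.
Proof. rewrite /Wf dz_t /pdz /polW derivC. exact: t0. Qed.
Lemma c_d2Z : dzb (@Zf R) = 0.
Proof.
rewrite /Zf dzb_t /pdw /polZ.
have -> : map_poly (@deriv _) ('X : Pol) = 0.
  apply/polyP => i. rewrite coef_map /= coefX coef0.
  case: (i == 1)%N; [exact: derivC | exact: derivC].
exact: t0.
Qed.
Lemma c_d2W : dzb (@Wf R) = 1.
Proof.
rewrite /Wf dzb_t /pdw /polW.
have -> : map_poly (@deriv _) ((('X : {poly C}))%:P : Pol) = 1.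
  rewrite (map_polyC (@deriv _)). rewrite -polyC1; congr (_%:P); exact: derivX.
exact: t1.
Qed.

Lemma c_d12 (f : Kf) : dz (dzb f) = dzb (dz f).
Proof.
apply/eqP; rewrite -subr_eq0; apply/eqP.
have := (@fd_zero R (fun f => dz (dzb f) - dzb (dz f))).
apply.
- move=> a b. rewrite c_d2D c_d1D c_d1D c_d2D.
  move: (dz (dzb a)) (dz (dzb b)) (dzb (dz a)) (dzb (dz b)) => *. ring.
- move=> a b. rewrite c_d2M c_d1M c_d1D c_d1M c_d1M c_d2D c_d2M c_d2M.
  move: (dz (dzb a)) (dz (dzb b)) (dzb (dz a)) (dzb (dz b)) (dz a) (dz b) (dzb a) (dzb b) => *. ring.
- move=> p. rewrite dzb_t dz_t dz_t dzb_t pdzw. exact: subrr.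
Qed.

Lemma c_ZW : @Zf R - @Wf R != 0.
Proof.
rewrite /Zf /Wf -tB tofrac_eq0. apply/eqP => h.
have := congr1 (fun p : Pol => p`_1) h.
rewrite /= coefB /polZ /polW coefX coefC /= subr0 coef0 => /eqP. rewrite oner_eq0. done.
Qed.
End S.
Lemma alg_gen_eq (R : rcfType) G D : alg_gen G D <-> @galg_gen (R[i])%C (Kf R) (@cst R) G D.
Proof.
split; elim => [D0 HD | | D1 D2 _ h1 _ h2 | c D0 _ h | D1 D2 _ h1 _ h2].
- exact: gag_base.
- exact: gag_id.
- exact: gag_add h1 h2.
- exact: gag_scale c _ h.
- exact: gag_comp h1 h2.
- exact: ag_base.
- exact: ag_id.
- exact: ag_add h1 h2.
- exact: ag_scale c _ h.
- exact: ag_comp h1 h2.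
Qed.

Theorem theorem2 (R : rcfType) :
  (* B is a subalgebra of the algebra of differential operators *)
  (forall D : Op R, in_B D -> is_diffop D) /\
  in_B (@op_id R) /\
  (forall D1 D2 : Op R, in_B D1 -> in_B D2 -> in_B (op_add D1 D2)) /\
  (forall (c : R[i]%C) (D : Op R), in_B D -> in_B (op_scale c D)) /\
  (forall D1 D2 : Op R, in_B D1 -> in_B D2 -> in_B (op_comp D1 D2)) /\
  (* B is generated by the seven operators *)
  (forall D : Op R, in_B D <-> alg_gen (@B_gens R) D).
Proof.
have [H1 [H2 [H3 [H4 [H5 H6]]]]] := (@gen_main (R[i])%C (Kf R) (@cst R) (@dz R) (@dzb R) (@Zf R) (@Wf R)
  (@c_cstD R) (@c_cstM R) (@c_cst1 R) (@c_two R) (@c_d1D R) (@c_d1M R) (@c_d2D R) (@c_d2M R)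
  (@c_d1C R) (@c_d2C R) (@c_d1Z R) (@c_d1W R) (@c_d2Z R) (@c_d2W R) (@c_d12 R) (@c_ZW R)).
split. move=> D hD. apply/alg_gen_eq. exact: H1.
split. exact H2.
split. exact H3.
split. exact H4.
split. exact H5.
move=> D. rewrite alg_gen_eq. exact: H6.
Qed.
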